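(* Let $\delta_1>0$ be an admissible one-dimensional sum-product exponent, i.e. a constant such that every finite, non-empty set $B\subseteq\mathbb{R}$ satisfies $|B+B|+|B\cdot B|\gtrsim |B|^{1+\delta_1}$, and for $u\in\mathbb{N}$ put $\delta_u=\delta_1/u$. Let $d\ge 2$, let $H$ be an axis aligned affine subspace of $\mathbb{R}^d$ of dimension $r$ with $1\le r\le d-1$, and let $A$ be a finite, non-empty subset of $H$. Then \[ |A+A|+|A\cdot A| \gtrsim_r |A|^{1+\delta_r}. \]
   Context: Addition and multiplication in $\mathbb{R}^d$ are coordinatewise, and $A+A=\{a+b:a,b\in A\}$, $A\cdot A=\{a\cdot b: a,b\in A\}$. An affine subspace $H\subseteq\mathbb{R}^d$ is axis aligned if $H=X_1\times\cdots\times X_d$ where for each $i$ either $X_i=\{a_i\}$ for some $a_i\in\mathbb{R}$ or $X_i=\mathbb{R}$. Notation: $X\gtrsim_z Y$ means $|X|\ge C|Y|(\log|A|)^{D}$ for some constants $C>0$ and $D$ depending only on the parameter $z$ (with $A$ the set under consideration); $\gtrsim$ is the same with absolute constants. By a result of Shakan, $\delta_1=1/3+5/5277$ is admissible. *)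

(* Defs.v *)
From Stdlib Require Import Reals.
From mathcomp Require Import all_boot all_algebra.
From mathcomp Require Import finmap.
From mathcomp Require Import Rstruct.

Set Implicit Arguments.
Unset Strict Implicit.
Unset Printing Implicit Defensive.

Local Open Scope fset_scope.

Definition cwmul (d : nat) (a b : 'rV[R]_d) : 'rV[R]_d :=
  \row_i (a ord0 i * b ord0 i)%R.

Definition sumset {d : nat} (A : {fset 'rV[R]_d}) : {fset 'rV[R]_d} :=
  [fset (a + b)%R | a in A, b in A].
Definition prodset {d : nat} (A : {fset 'rV[R]_d}) : {fset 'rV[R]_d} :=
  [fset cwmul a b | a in A, b in A].

Definition sumset1 (B : {fset R}) : {fset R} := [fset (a + b)%R | a in B, b in B].
Definition prodset1 (B : {fset R}) : {fset R} := [fset (a * b)%R | a in B, b in B].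

Definition logpow (n : nat) (D : R) : R := Rpower (ln (INR n)) D.

Definition gtrsim_with (C D : R) (X Y : R) (n : nat) : Prop :=
  (C * Y * logpow n D <= X)%R.

Definition sp_admissible (delta1 : R) : Prop :=
  exists C D : R, (0 < C)%R /\
    forall B : {fset R}, B != fset0 ->
      gtrsim_with C D
        (INR #|` sumset1 B| + INR #|` prodset1 B|)%R
        (Rpower (INR #|` B|) (1 + delta1))
        #|` B|.

(* An axis-aligned affine subspace H = X_1 x ... x X_d of R^d is encoded by
   f : 'I_d -> option R, where f i = Some a means X_i = {a}, and
   f i = None means X_i = R. *)
Definition in_axis_aligned (d : nat) (f : 'I_d -> option R) (x : 'rV[R]_d) : Prop :=
  forall i : 'I_d, match f i with Some a => x ord0 i = a | None => True end.

Definition axis_dim (d : nat) (f : 'I_d -> option R) : nat :=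
  #|[set i : 'I_d | f i == None]|.

(* Main.v *)
Require Import Defs.
From Stdlib Require Import Reals Lra Lia.

Local Open Scope R_scope.


Lemma ln_le' x y : 0 < x -> x <= y -> ln x <= ln y.
Proof. intros Hx [H|H]. left; apply ln_increasing; lra. subst; lra. Qed.

Lemma exp_le' x y : x <= y -> exp x <= exp y.
Proof. intros [H|H]. left; apply exp_increasing; lra. subst; lra. Qed.

Lemma ln0 : ln 0 = 0.
Proof. unfold ln. destruct (Rlt_dec 0 0) as [h|h]; [exfalso; exact (Rlt_irrefl 0 h)|reflexivity]. Qed.

Lemma exp_le_of_ln x y : 0 < y -> x <= ln y -> exp x <= y.
Proof. intros Hy H. rewrite <- (exp_ln y) by lra. now apply exp_le'. Qed.

Lemma ln_ge_of_exp x y : exp x <= y -> x <= ln y.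
Proof. intros H. rewrite <- (ln_exp x). apply ln_le'; [apply exp_pos|lra]. Qed.

Lemma INR_pos n : (1 <= n)%nat -> 0 < INR n.
Proof. intros. apply lt_0_INR. Lia.lia. Qed.

Lemma ln_INR_ge0 n : (1 <= n)%nat -> 0 <= ln (INR n).
Proof. intros H. rewrite <- ln_1. apply ln_le'. lra. apply (le_INR 1 n) in H. simpl in H. lra. Qed.

Definition lg (n : nat) : R := ln (1 + ln (INR n)).

Lemma lg_ge0 n : (1 <= n)%nat -> 0 <= lg n.
Proof. intros H. unfold lg. rewrite <- ln_1. apply ln_le'. lra. pose proof (ln_INR_ge0 n H). lra. Qed.

Lemma lnINR_le m n : (1 <= m)%nat -> (m <= n)%nat -> ln (INR m) <= ln (INR n).
Proof. intros H1 H2. apply ln_le'. now apply INR_pos. now apply le_INR. Qed.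

Lemma lg_le m n : (1 <= m)%nat -> (m <= n)%nat -> lg m <= lg n.
Proof. intros H1 H2. unfold lg. apply ln_le'. pose proof (ln_INR_ge0 m H1). lra.
  pose proof (lnINR_le m n H1 H2). lra. Qed.

Fixpoint Hn (n : nat) : R := match n with O => 0 | S k => Hn k + / INR (S k) end.

Lemma ln_succ_step n : (1 <= n)%nat -> / INR (S n) <= ln (INR (S n)) - ln (INR n).
Proof.
  intros Hn1. pose proof (INR_pos n Hn1) as Hp. rewrite S_INR.
  assert (Hq : 0 < INR n + 1) by lra.
  pose proof (exp_ineq1_le (- / (INR n + 1))) as He.
  assert (H2 : INR n <= (INR n + 1) * exp (- / (INR n + 1))).
  { apply Rle_trans with ((INR n + 1) * (1 + - / (INR n + 1))).
    right. field. lra. apply Rmult_le_compat_l; lra. }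
  apply ln_le' in H2; [|lra]. rewrite ln_mult in H2 by (try lra; apply exp_pos).
  rewrite ln_exp in H2. lra.
Qed.

Lemma Hn_le n : (1 <= n)%nat -> Hn n <= 1 + ln (INR n).
Proof.
  induction n as [|n IH]; intros H. Lia.lia.
  destruct n as [|n]. simpl. rewrite ln_1. lra.
  change (Hn (S (S n))) with (Hn (S n) + / INR (S (S n))).
  pose proof (ln_succ_step (S n)). specialize (IH ltac:(Lia.lia)). specialize (H0 ltac:(Lia.lia)). lra.
Qed.

Fixpoint Sc (c : nat -> nat) (n : nat) : nat := match n with O => O | S k => (Sc c k + c (S k))%nat end.

Lemma pigeon_harm (c : nat -> nat) (N : nat) : (1 <= N)%nat -> (N <= Sc c N)%nat ->
  exists M, (1 <= M <= N)%nat /\ INR N <= INR M * INR (c M) * (1 + ln (INR N)).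
Proof.
  intros HN HS. apply Classical_Prop.NNPP. intros Hno.
  assert (Hl : 1 <= 1 + ln (INR N)) by (pose proof (ln_INR_ge0 N HN); lra).
  assert (Hall : forall M, (1 <= M <= N)%nat -> INR (c M) * (1 + ln (INR N)) < INR N * / INR M).
  { intros M HM. destruct (Rlt_dec (INR (c M) * (1 + ln (INR N))) (INR N * / INR M)) as [h|h]; auto.
    exfalso. apply Hno. exists M. split; auto.
    pose proof (INR_pos M ltac:(Lia.lia)).
    apply Rnot_lt_le in h. apply Rmult_le_compat_l with (r := INR M) in h; [|lra].
    replace (INR M * (INR N * / INR M)) with (INR N) in h by (field; lra). lra. }
  assert (Hind : forall n, (1 <= n <= N)%nat -> INR (Sc c n) * (1 + ln (INR N)) < INR N * Hn n).
  { induction n as [|n IH]; intros Hn1. Lia.lia.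
    destruct n as [|n].
    - simpl. specialize (Hall 1%nat ltac:(Lia.lia)). simpl in Hall. lra.
    - specialize (IH ltac:(Lia.lia)). specialize (Hall (S (S n)) ltac:(Lia.lia)).
      change (Sc c (S (S n))) with (Sc c (S n) + c (S (S n)))%nat.
      change (Hn (S (S n))) with (Hn (S n) + / INR (S (S n))).
      rewrite plus_INR. lra. }
  specialize (Hind N ltac:(Lia.lia)). apply le_INR in HS.
  pose proof (Hn_le N HN). pose proof (INR_pos N HN).
  assert (INR N * (1 + ln (INR N)) <= INR (Sc c N) * (1 + ln (INR N))) by (apply Rmult_le_compat_r; lra).
  assert (INR N * Hn N <= INR N * (1 + ln (INR N))) by (apply Rmult_le_compat_l; lra). lra.
Qed.

Lemma sq_inj_sign (b c : R) : (0 <= b /\ 0 <= c) \/ (b < 0 /\ c < 0) -> b * b = c * c -> b = c.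
Proof.
  intros H E. assert (E2 : (b - c) * (b + c) = 0) by (transitivity (b*b - c*c); [ring | rewrite E; ring]).
  destruct (Rmult_integral _ _ E2); lra.
Qed.


Lemma lnN_bound (N M K : nat) : (1 <= M)%nat -> (1 <= K)%nat -> (1 <= N)%nat ->
  INR N <= INR M * INR K * (1 + ln (INR N)) ->
  ln (INR N) <= ln (INR M) + ln (INR K) + lg N.
Proof.
  intros HM HK HN H. pose proof (INR_pos M HM). pose proof (INR_pos K HK). pose proof (INR_pos N HN).
  pose proof (ln_INR_ge0 N HN).
  apply ln_le' in H; auto. rewrite !ln_mult in H; try lra; try (apply Rmult_lt_0_compat; auto). unfold lg. lra.
Qed.

Lemma combine (delta a a0 E E0 s : R) (k N M K : nat) :
  0 < delta -> (1 <= k)%nat -> 0 <= E -> 0 <= E0 -> (1 <= M)%nat -> (1 <= K)%nat -> (1 <= N)%nat ->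
  INR N <= INR M * INR K * (1 + ln (INR N)) ->
  ln (INR M) + a0 + (1 + delta) * ln (INR K) - E0 * lg N <= s ->
  ln (INR K) + a + (1 + delta / INR k) * ln (INR M) - E * lg N - ln 2 <= s ->
  Rmin (Rmin a0 (a - ln 2)) 0 + (1 + delta / INR (S k)) * ln (INR N) - (1 + delta + E0 + E) * lg N <= s.
Proof.
  intros Hd Hk HE HE0 HM HK HN Hb H1 H2.
  pose proof (lnN_bound N M K HM HK HN Hb) as Hl.
  pose proof (ln_INR_ge0 M HM) as Hx. pose proof (ln_INR_ge0 K HK) as Hy.
  pose proof (lg_ge0 N HN) as HL.
  rewrite S_INR.
  set (kr := INR k) in *. assert (Hkr : 1 <= kr) by (unfold kr; change 1 with (INR 1); apply le_INR; exact Hk).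
  set (x := ln (INR M)) in *. set (y := ln (INR K)) in *. set (L := lg N) in *. set (lN := ln (INR N)) in *.
  pose proof (Rmin_l (Rmin a0 (a - ln 2)) 0). pose proof (Rmin_l a0 (a - ln 2)). pose proof (Rmin_r a0 (a - ln 2)).
  set (m := Rmin (Rmin a0 (a - ln 2)) 0) in *.
  assert (Hm1 : m <= a0) by lra.
  assert (Hm2 : m <= a - ln 2) by lra.
  assert (e : kr * (y + a + (1 + delta / kr) * x - E * L - ln 2) = kr*y + kr*a + kr*x + delta*x - kr*E*L - kr*ln 2) by (field; lra).
  assert (H2' : kr * (y + a + (1 + delta / kr) * x - E * L - ln 2) <= kr * s) by (apply Rmult_le_compat_l; lra).
  rewrite e in H2'.
  assert (P1 : 0 <= kr * E0 * L) by (apply Rmult_le_pos; [apply Rmult_le_pos|]; lra).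
  assert (P2 : 0 <= E * L) by (apply Rmult_le_pos; lra).
  assert (P3 : 0 <= kr * delta * L) by (apply Rmult_le_pos; [apply Rmult_le_pos|]; lra).
  assert (P4 : kr * m <= kr * (a - ln 2)) by (apply Rmult_le_compat_l; lra).
  assert (P5 : (kr + 1 + delta) * (lN - L) <= (kr + 1 + delta) * (x + y)) by (apply Rmult_le_compat_l; lra).
  apply Rmult_le_reg_l with (kr + 1). lra.
  assert (e2 : (kr + 1) * (m + (1 + delta / (kr + 1)) * lN - (1 + delta + E0 + E) * L) =
     (kr + 1) * m + (kr + 1) * lN + delta * lN - (kr + 1) * (1 + delta + E0 + E) * L) by (field; lra).
  rewrite e2. lra.
Qed.

Lemma combine1 (delta a0 E0 s : R) (N K : nat) :
  0 < delta -> 0 <= E0 -> (1 <= K)%nat -> (1 <= N)%nat ->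
  INR N <= INR 1 * INR K * (1 + ln (INR N)) ->
  ln (INR 1) + a0 + (1 + delta) * ln (INR K) - E0 * lg N <= s ->
  Rmin a0 0 + (1 + delta / INR 1) * ln (INR N) - (1 + delta + E0) * lg N <= s.
Proof.
  intros Hd HE0 HK HN Hb H1.
  pose proof (lnN_bound N 1 K (le_n 1) HK HN Hb) as Hl.
  pose proof (ln_INR_ge0 K HK) as Hy. pose proof (lg_ge0 N HN) as HL.
  simpl INR in *. rewrite ln_1 in Hl, H1. replace (delta / 1) with delta by field.
  pose proof (Rmin_l a0 0).
  assert (P5 : (1 + delta) * (ln (INR N) - lg N) <= (1 + delta) * (ln (INR K))) by (apply Rmult_le_compat_l; lra).
  assert (P3 : 0 <= delta * lg N) by (apply Rmult_le_pos; lra).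
  assert (P1 : 0 <= E0 * lg N) by (apply Rmult_le_pos; lra).
  lra.
Qed.


Local Close Scope R_scope.

From mathcomp Require Import all_boot all_algebra finmap Rstruct zify.

Local Open Scope R_scope.


Lemma lhs_exp C a D n : 0 < C ->
  C * Rpower (INR n) a * logpow n D = exp (ln C + a * ln (INR n) + D * ln (ln (INR n))).
Proof. intros HC. unfold logpow, Rpower. rewrite !exp_plus exp_ln; auto. Qed.

Lemma lnln1 : ln (ln (INR 1)) = 0.
Proof. simpl. rewrite ln_1. apply ln0. Qed.

Lemma lg1 : lg 1 = 0.
Proof. unfold lg. simpl. rewrite ln_1. replace (1+0) with 1 by lra. apply ln_1. Qed.

Lemma lnln_bounds n : (2 <= n)%nat ->
  - ln 2 <= ln (ln (INR n)) <= lg n /\ lg n - ln 3 <= ln (ln (INR n)).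
Proof.
  intros Hn. pose proof ln_lt_2 as H2.
  assert (Hl2 : ln 2 <= ln (INR n)).
  { replace 2 with (INR 2) by (simpl; lra). apply (lnINR_le 2 n); lia. }
  assert (Hlinv : ln (/2) = - ln 2) by (apply ln_Rinv; lra).
  split; [split|].
  - rewrite <- Hlinv. apply ln_le'; lra.
  - unfold lg. apply ln_le'; lra.
  - unfold lg. assert (ln (1 + ln (INR n)) <= ln (3 * ln (INR n))) by (apply ln_le'; lra).
    rewrite ln_mult in H; lra.
Qed.

Lemma gtrsimE C D X Y n : gtrsim_with C D X Y n <-> C * Y * logpow n D <= X.
Proof. unfold gtrsim_with. split. move/RleP. auto. move=> H. by apply/RleP. Qed.

Lemma adm_log (delta1 : R) : sp_admissible delta1 -> exists a0 E0, 0 <= E0 /\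
  forall B : {fset R}, B != fset0 ->
   a0 + (1 + delta1) * ln (INR #|` B|) - E0 * lg #|` B| <=
   ln (INR #|` sumset1 B| + INR #|` prodset1 B|).
Proof.
  intros [C [D [HC H]]]. move/RltP: HC => HC. exists (ln C - Rabs D * ln 2), (Rabs D). split. apply Rabs_pos.
  intros B HB. specialize (H B HB). apply gtrsimE in H. rewrite lhs_exp in H; auto.
  apply ln_ge_of_exp in H.
  assert (Hn : (1 <= #|` B|)%nat) by (rewrite cardfs_gt0; auto).
  assert (Hb : D * ln (ln (INR #|` B|)) >= - Rabs D * ln 2 - Rabs D * lg #|` B|).
  { destruct (Nat.eq_dec #|` B| 1) as [E|E].
    - rewrite E lnln1 lg1. pose proof (Rabs_pos D). pose proof ln_lt_2. nra.
    - destruct (lnln_bounds #|` B| ltac:(lia)) as [[h1 h2] h3].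
      pose proof (lg_ge0 #|` B| ltac:(lia)). pose proof ln_lt_2.
      destruct (Rle_dec 0 D). rewrite Rabs_right; nra. rewrite Rabs_left; nra. }
  rewrite -?RplusE in H. lra.
Qed.

Lemma final_conv C D a n X : 0 < C -> (1 <= n)%nat -> 0 < X ->
  ln C + a * ln (INR n) + D * ln (ln (INR n)) <= ln X ->
  C * Rpower (INR n) a * logpow n D <= X.
Proof. intros HC Hn HX H. rewrite lhs_exp; auto. apply exp_le_of_ln; auto. Qed.


Local Close Scope R_scope.
Set Implicit Arguments. Unset Strict Implicit. Unset Printing Implicit Defensive.
Local Open Scope fset_scope.


Lemma disj_sum_le (T1 : eqType) (T2 : choiceType) (X : seq T1) (Y : T1 -> {fset T2}) (Z : {fset T2}) :
  uniq X -> (forall b, b \in X -> Y b `<=` Z) ->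
  (forall b c w, b \in X -> c \in X -> w \in Y b -> w \in Y c -> b = c) ->
  (\sum_(b <- X) #|` Y b| <= #|` Z|)%N.
Proof.
  elim: X Z => [|b0 X IH] Z /= HU HS HD; first by rewrite big_nil.
  move/andP: HU => [Hb0 HU]. rewrite big_cons.
  have HS0 : Y b0 `<=` Z by apply: HS; rewrite inE eqxx.
  have H1 := IH (Z `\` Y b0) HU.
  have : (\sum_(b <- X) #|` Y b| <= #|` Z `\` Y b0|)%N.
  { apply: H1.
    - move=> b Hb. apply/fsubsetP => w Hw. rewrite in_fsetD.
      apply/andP; split; last by apply: (fsubsetP (HS b _)) => //; rewrite inE Hb orbT.
      apply/negP => Hw0. have E : b = b0 by apply: (HD b b0 w) => //; rewrite inE ?Hb ?orbT ?eqxx.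
      by move: Hb0; rewrite -E Hb.
    - move=> b c w Hb Hc. apply: HD; by rewrite inE ?Hb ?Hc orbT. }
  rewrite cardfsDS // => H2. have := fsubset_leq_card HS0. lia.
Qed.

Lemma cover_sum_ge (T1 : eqType) (T2 : choiceType) (X : seq T1) (Y : T1 -> {fset T2}) (Z : {fset T2}) :
  (forall w, w \in Z -> exists2 b, b \in X & w \in Y b) ->
  (#|` Z| <= \sum_(b <- X) #|` Y b|)%N.
Proof.
  elim: X Z => [|b0 X IH] Z HC.
  - rewrite big_nil. case: (fset_0Vmem Z) => [->|[w Hw]]; first by rewrite cardfs0.
    by case: (HC w Hw).
  - rewrite big_cons.
    have H1 : (#|` Z `\` Y b0| <= \sum_(b <- X) #|` Y b|)%N.
    { apply: IH => w. rewrite in_fsetD => /andP [Hn Hw]. case: (HC w Hw) => b.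
      rewrite inE => /orP [/eqP ->|Hb] Hwb; first by rewrite Hwb in Hn.
      by exists b. }
    have := cardfsID (Y b0) Z. have := fsubset_leq_card (fsubsetIr Z (Y b0)). lia.
Qed.

Lemma const_sum_le (T : eqType) (X : seq T) (g : T -> nat) (M : nat) :
  (forall b, b \in X -> M <= g b)%N -> (M * size X <= \sum_(b <- X) g b)%N.
Proof.
  elim: X => [|b X IH] H /=; first by rewrite big_nil muln0.
  rewrite big_cons mulnS. have := H b (mem_head _ _).
  have := IH (fun c Hc => H c ltac:(by rewrite inE Hc orbT)). lia.
Qed.

Lemma inj_card_le (T T' : choiceType) (f : T -> T') (X : {fset T}) (Z : {fset T'}) :
  {in X &, injective f} -> (forall x, x \in X -> f x \in Z) -> (#|` X| <= #|` Z|)%N.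
Proof.
  move=> Hi Hm. have E := card_in_imfset imfset_key (p := mem X) Hi. rewrite /= in E.
  have <- : #|` [fset f x | x in X]| = #|` X| by rewrite E.
  apply: fsubset_leq_card. apply/fsubsetP => w /imfsetP [x Hx ->]. exact: Hm.
Qed.


Definition const_out d (F : {set 'I_d}) (A : {fset 'rV[R]_d}) : Prop :=
  forall a b, a \in A -> b \in A -> forall j, j \notin F -> a ord0 j = b ord0 j.
Definition nz_on d (F : {set 'I_d}) (A : {fset 'rV[R]_d}) : Prop :=
  forall a, a \in A -> forall j, j \in F -> a ord0 j <> 0%R.
Definition SS d (A : {fset 'rV[R]_d}) : nat := (#|` sumset A| + #|` prodset A|)%N.
Definition S1 (B : {fset R}) : nat := (#|` sumset1 B| + #|` prodset1 B|)%N.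
Definition fib d (i : 'I_d) (A : {fset 'rV[R]_d}) (b : R) : {fset 'rV[R]_d} :=
  [fset a in A | a ord0 i == b].
Definition proj d (i : 'I_d) (A : {fset 'rV[R]_d}) : {fset R} := [fset a ord0 i | a : 'rV[R]_d in A].
Definition BM d (i : 'I_d) (A : {fset 'rV[R]_d}) (M : nat) : {fset R} :=
  [fset x in filter (fun b => M <= #|` fib i A b|)%N (proj i A)].

Lemma fib_sub d (i : 'I_d) A b : fib i A b `<=` A.
Proof. apply/fsubsetP => a. rewrite !inE. by case/andP. Qed.

Lemma in_fib d (i : 'I_d) A b a : (a \in fib i A b) = (a \in A) && (a ord0 i == b).
Proof. by rewrite !inE. Qed.

Lemma count_sum (T : Type) (a : pred T) (s : seq T) : count a s = \sum_(j <- s) a j.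
Proof. elim: s => [|x s IH] /=; by rewrite ?big_nil ?big_cons // IH. Qed.

Lemma sum_indic_min n N : \sum_(1 <= M < N.+1) (M <= n)%N = minn n N.
Proof.
  elim: N => [|N IH]; first by rewrite big_geq //; lia.
  rewrite big_nat_recr //= IH. case: (leqP N.+1 n) => H /=; lia.
Qed.

Lemma sum_indic n N : (n <= N)%N -> \sum_(1 <= M < N.+1) (M <= n)%N = n.
Proof. move=> H. rewrite sum_indic_min. lia. Qed.

Lemma Sc_big c N : Sc c N = \sum_(1 <= M < N.+1) c M.
Proof. elim: N => [|N IH] /=; first by rewrite big_geq. by rewrite big_nat_recr //= IH. Qed.

Lemma card_BM d (i : 'I_d) A M : #|` BM i A M| = count (fun b => M <= #|` fib i A b|)%N (proj i A).
Proof. rewrite /BM card_fseq undup_id ?size_filter //. apply: filter_uniq. apply: fset_uniq. Qed.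

Lemma in_BM d (i : 'I_d) A M b : (b \in BM i A M) = (b \in proj i A) && (M <= #|` fib i A b|)%N.
Proof. rewrite /BM !inE mem_filter. by rewrite andbC. Qed.

Lemma pigeon d (i : 'I_d) (A : {fset 'rV[R]_d}) : A != fset0 ->
  exists M, (1 <= M <= #|` A|)%N /\
    Rle (INR #|` A|) (INR M * INR #|` BM i A M| * (1 + ln (INR #|` A|))).
Proof.
  move=> HA. set N := #|` A|.
  have HN : (1 <= N)%N by rewrite cardfs_gt0.
  have Hle : (N <= Sc (fun M => #|` BM i A M|) N)%N.
  { rewrite Sc_big.
    have -> : \sum_(1 <= M < N.+1) #|` BM i A M| = \sum_(1 <= M < N.+1) \sum_(b <- proj i A) (M <= #|` fib i A b|)%N.
    { apply: eq_bigr => M _. by rewrite card_BM count_sum. }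
    rewrite exchange_big /=.
    have -> : \sum_(b <- proj i A) \sum_(1 <= M < N.+1) (M <= #|` fib i A b|)%N = \sum_(b <- proj i A) #|` fib i A b|.
    { rewrite big_seq [RHS]big_seq. apply: eq_bigr => b _. apply: sum_indic. apply: fsubset_leq_card. apply: fib_sub. }
    apply: cover_sum_ge => a Ha. exists (a ord0 i).
    - apply/imfsetP. by exists a.
    - by rewrite in_fib Ha eqxx. }
  have [M [HM1 HM2]] := pigeon_harm (fun M => #|` BM i A M|) N ltac:(lia) ltac:(lia).
  exists M. split => //. lia.
Qed.


Lemma coord_add d (a b : 'rV[R]_d) j : (a + b)%R ord0 j = (a ord0 j + b ord0 j)%R.
Proof. by rewrite mxE. Qed.

Lemma coord_mul d (a b : 'rV[R]_d) j : cwmul a b ord0 j = (a ord0 j * b ord0 j)%R.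
Proof. by rewrite /cwmul mxE. Qed.

Lemma sumset_mono d (A A' : {fset 'rV[R]_d}) : A' `<=` A -> sumset A' `<=` sumset A.
Proof.
  move=> H. apply/fsubsetP => w /imfset2P [a Ha [b Hb ->]].
  apply: in_imfset2; by apply: (fsubsetP H).
Qed.

Lemma prodset_mono d (A A' : {fset 'rV[R]_d}) : A' `<=` A -> prodset A' `<=` prodset A.
Proof.
  move=> H. apply/fsubsetP => w /imfset2P [a Ha [b Hb ->]].
  apply: in_imfset2; by apply: (fsubsetP H).
Qed.

Lemma SS_mono d (A A' : {fset 'rV[R]_d}) : A' `<=` A -> (SS A' <= SS A)%N.
Proof.
  move=> H. rewrite /SS. have := fsubset_leq_card (sumset_mono H).
  have := fsubset_leq_card (prodset_mono H). lia.
Qed.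

Lemma fib_nonempty d (i : 'I_d) A M b : (1 <= M)%N -> (M <= #|` fib i A b|)%N -> exists a, a \in fib i A b.
Proof. move=> H1 H2. apply/fset0Pn. rewrite -cardfs_gt0. lia. Qed.

Lemma sum_part d (F : {set 'I_d}) (A : {fset 'rV[R]_d}) i M : (1 <= M)%N ->
  (M * #|` sumset1 (BM i A M)| <= #|` sumset A|)%N.
Proof.
  move=> HM. set Zs := fun s : R => [fset w in sumset A | w ord0 i == s].
  apply: leq_trans (_ : \sum_(s <- sumset1 (BM i A M)) #|` Zs s| <= _)%N.
  - apply: const_sum_le => s /imfset2P [x Hx [y Hy ->]].
    rewrite in_BM in Hx. rewrite in_BM in Hy. case/andP: Hx => _ Hx. case/andP: Hy => _ Hy.
    have [a Ha] := fib_nonempty HM Hx.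
    apply: leq_trans Hy _. apply: (@inj_card_le _ _ (fun z => a + z)%R).
    + move=> z z' _ _ /=. apply: GRing.addrI.
    + move=> z Hz. rewrite !inE /=. rewrite in_fib in Ha. rewrite in_fib in Hz.
      case/andP: Ha => Ha /eqP Hax. case/andP: Hz => Hz /eqP Hzy.
      rewrite coord_add Hax Hzy eqxx andbT. by apply: in_imfset2.
  - apply: disj_sum_le; first exact: fset_uniq.
    + move=> s _. apply/fsubsetP => w. rewrite !inE. by case/andP.
    + move=> b c w _ _. rewrite !inE => /andP [_ /eqP <-] /andP [_ /eqP <-]. by [].
Qed.

Lemma prod_part d (F : {set 'I_d}) (A : {fset 'rV[R]_d}) i M : (1 <= M)%N ->
  const_out F A -> nz_on F A ->
  (M * #|` prodset1 (BM i A M)| <= #|` prodset A|)%N.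
Proof.
  move=> HM Hc Hn. set Zs := fun s : R => [fset w in prodset A | w ord0 i == s].
  apply: leq_trans (_ : \sum_(s <- prodset1 (BM i A M)) #|` Zs s| <= _)%N.
  - apply: const_sum_le => s /imfset2P [x Hx [y Hy ->]].
    rewrite in_BM in Hx. rewrite in_BM in Hy. case/andP: Hx => _ Hx. case/andP: Hy => _ Hy.
    have [a Ha] := fib_nonempty HM Hx.
    rewrite in_fib in Ha. case/andP: Ha => Ha /eqP Hax.
    apply: leq_trans Hy _. apply: (@inj_card_le _ _ (fun z => cwmul a z)).
    + move=> z z' Hz Hz' /= E. rewrite in_fib in Hz. rewrite in_fib in Hz'.
      case/andP: Hz => Hz _. case/andP: Hz' => Hz' _.
      apply/rowP => j.
      case: (boolP (j \in F)) => Hj.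
      * have := f_equal (fun v : 'rV[R]_d => v ord0 j) E. rewrite /= !coord_mul.
        apply: GRing.mulfI. apply/eqP. exact: Hn.
      * exact: Hc.
    + move=> z Hz. rewrite !inE /=. rewrite in_fib in Hz.
      case/andP: Hz => Hz /eqP Hzy.
      rewrite coord_mul Hax Hzy eqxx andbT. by apply: in_imfset2.
  - apply: disj_sum_le; first exact: fset_uniq.
    + move=> s _. apply/fsubsetP => w. rewrite !inE. by case/andP.
    + move=> b c w _ _. rewrite !inE => /andP [_ /eqP <-] /andP [_ /eqP <-]. by [].
Qed.

Lemma two_part d (F : {set 'I_d}) (A : {fset 'rV[R]_d}) i M : (1 <= M)%N ->
  const_out F A -> nz_on F A -> (M * S1 (BM i A M) <= SS A)%N.
Proof.
  move=> HM Hc Hn. rewrite /S1 /SS mulnDr.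
  have := sum_part F A i HM. have := prod_part i HM Hc Hn. lia.
Qed.


Lemma sumset_fib_coord d (i : 'I_d) A b w : w \in sumset (fib i A b) -> w ord0 i = (b + b)%R.
Proof.
  move=> /imfset2P [x Hx [y Hy ->]]. rewrite coord_add.
  rewrite in_fib in Hx. rewrite in_fib in Hy. case/andP: Hx => _ /eqP ->. by case/andP: Hy => _ /eqP ->.
Qed.

Lemma prodset_fib_coord d (i : 'I_d) A b w : w \in prodset (fib i A b) -> w ord0 i = (b * b)%R.
Proof.
  move=> /imfset2P [x Hx [y Hy ->]]. rewrite coord_mul.
  rewrite in_fib in Hx. rewrite in_fib in Hy. case/andP: Hx => _ /eqP ->. by case/andP: Hy => _ /eqP ->.
Qed.

Lemma prod_fib_sign d (i : 'I_d) A (X : seq R) (P : pred R) :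
  uniq X -> (forall b c, P b -> P c -> (b * b)%R = (c * c)%R -> b = c) ->
  (\sum_(b <- X | P b) #|` prodset (fib i A b)| <= #|` prodset A|)%N.
Proof.
  move=> HU HP. rewrite -big_filter. apply: disj_sum_le.
  - exact: filter_uniq.
  - move=> b _. apply: prodset_mono. exact: fib_sub.
  - move=> b c w. rewrite !mem_filter => /andP [Pb _] /andP [Pc _] Hb Hc.
    apply: HP => //. by rewrite -(prodset_fib_coord Hb) -(prodset_fib_coord Hc).
Qed.

Lemma fib_part d (i : 'I_d) (A : {fset 'rV[R]_d}) (X : seq R) : uniq X ->
  (\sum_(b <- X) SS (fib i A b) <= 2 * SS A)%N.
Proof.
  move=> HU. rewrite /SS big_split /=.
  have H1 : (\sum_(b <- X) #|` sumset (fib i A b)| <= #|` sumset A|)%N.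
  { apply: disj_sum_le => //.
    - move=> b _. apply: sumset_mono. exact: fib_sub.
    - move=> b c w _ _ Hb Hc. have := sumset_fib_coord Hb. rewrite (sumset_fib_coord Hc).
      rewrite -!RplusE. move=> E. lra. }
  have H2 := @prod_fib_sign d i A X (fun b => (0 <= b)%R) HU.
  have H3 := @prod_fib_sign d i A X (fun b => ~~ (0 <= b)%R) HU.
  have -> : \sum_(b <- X) #|` prodset (fib i A b)| = (\sum_(b <- X | (0 <= b)%R) #|` prodset (fib i A b)| + \sum_(b <- X | ~~ (0 <= b)%R) #|` prodset (fib i A b)|)%N.
  { by rewrite (bigID (fun b => (0 <= b)%R)). }
  have : (\sum_(i0 <- X | (0 <= i0)%R) #|` prodset (fib i A i0)| <= #|` prodset A|)%N.
  { apply: H2 => b c /RleP Hb /RleP Hc. rewrite -!RmultE => E. apply: sq_inj_sign E. by left. }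
  have : (\sum_(i0 <- X | ~~ (0 <= i0)%R) #|` prodset (fib i A i0)| <= #|` prodset A|)%N.
  { apply: H3 => b c /negP Hb /negP Hc. rewrite -!RmultE => E. apply: sq_inj_sign E. right.
    split; apply: Rnot_le_lt => h; [apply: Hb | apply: Hc]; by apply/RleP. }
  move=> Ha Hb. apply: leq_trans (leq_add H1 (leq_add Hb Ha)) _. exact: (fun a b : nat => ltac:(lia) : (a + (b + b) <= 2 * (a + b))%N) _ _.
Qed.


Local Open Scope R_scope.


Lemma real_sum_ge (T : eqType) (X : seq T) (g : T -> nat) (t : R) :
  (forall b, b \in X -> t <= INR (g b)) -> INR (size X) * t <= INR (\sum_(b <- X) g b).
Proof.
  elim: X => [|b X IH] H; first by rewrite big_nil /=; lra.
  rewrite big_cons plus_INR. change (size (b :: X)) with (size X).+1. rewrite S_INR.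
  have H1 := H b (mem_head _ _).
  have H2 := IH (fun c Hc => H c ltac:(by rewrite inE Hc orbT)). lra.
Qed.

Lemma const_out_le1 d (A : {fset 'rV[R]_d}) : const_out set0 A -> (#|` A| <= 1)%N.
Proof.
  move=> H. case: (fset_0Vmem A) => [->|[x Hx]]; first by rewrite cardfs0.
  have : A `<=` [fset x]. { apply/fsubsetP => y Hy. rewrite inE. apply/eqP/rowP => j.
    apply: H => //. by rewrite inE. }
  move/fsubset_leq_card. by rewrite cardfs1.
Qed.

Lemma SS_ge1 d (A : {fset 'rV[R]_d}) : A != fset0 -> (1 <= SS A)%N.
Proof.
  case/fset0Pn => x Hx. rewrite /SS.
  have : (0 < #|` sumset A|)%N. { rewrite cardfs_gt0. apply/fset0Pn. exists (x + x)%R. by apply: in_imfset2. }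
  lia.
Qed.

Lemma lnSS_ge0 d (A : {fset 'rV[R]_d}) : A != fset0 -> 0 <= ln (INR (SS A)).
Proof. move=> H. apply: ln_INR_ge0. have := SS_ge1 H. lia. Qed.

Lemma card_proj d (i : 'I_d) A : (#|` proj i A| <= #|` A|)%N.
Proof. exact: leq_imfset_card. Qed.

Lemma card_BM_le d (i : 'I_d) A M : (#|` BM i A M| <= #|` A|)%N.
Proof.
  apply: leq_trans (card_proj i A). apply: fsubset_leq_card. apply/fsubsetP => b.
  rewrite in_BM. by case/andP.
Qed.

Definition Qk (delta : R) (k : nat) (a E : R) : Prop :=
  forall d (F : {set 'I_d}) (A : {fset 'rV[R]_d}), A != fset0 -> (#|F| <= k)%N ->
    const_out F A -> nz_on F A ->
    a + (1 + delta / INR k) * ln (INR #|` A|) - E * lg #|` A| <= ln (INR (SS A)).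

Lemma empty_case (delta : R) k a E d (A : {fset 'rV[R]_d}) : a <= 0 -> A != fset0 ->
  const_out set0 A ->
  a + (1 + delta / INR k) * ln (INR #|` A|) - E * lg #|` A| <= ln (INR (SS A)).
Proof.
  move=> Ha HA Hc. have H1 := const_out_le1 Hc. have H0 : (0 < #|` A|)%N by rewrite cardfs_gt0.
  have -> : #|` A| = 1%N by lia.
  rewrite lg1 /=. rewrite ln_1. have := lnSS_ge0 HA. lra.
Qed.


Lemma fib_const d (F : {set 'I_d}) A i b : const_out F A -> const_out (F :\ i) (fib i A b).
Proof.
  move=> Hc x y Hx Hy j Hj. rewrite in_fib in Hx. rewrite in_fib in Hy.
  case/andP: Hx => Hx /eqP Hxb. case/andP: Hy => Hy /eqP Hyb.
  case: (eqVneq j i) => [->|Hji]; first by rewrite Hxb Hyb.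
  apply: Hc => //. move: Hj. by rewrite !inE Hji.
Qed.

Lemma fib_nz d (F : {set 'I_d}) A i b : nz_on F A -> nz_on (F :\ i) (fib i A b).
Proof.
  move=> Hn x Hx j Hj. rewrite in_fib in Hx. case/andP: Hx => Hx _.
  apply: Hn => //. move: Hj. rewrite !inE. by case/andP.
Qed.

Lemma BM_facts d (i : 'I_d) (A : {fset 'rV[R]_d}) M : A != fset0 ->
  INR #|` A| <= INR M * INR #|` BM i A M| * (1 + ln (INR #|` A|)) ->
  (1 <= #|` BM i A M|)%N /\ BM i A M != fset0.
Proof.
  move=> HA H. have HN : (0 < #|` A|)%N by rewrite cardfs_gt0.
  case: (posnP #|` BM i A M|) => [E|Hp].
  - rewrite E /= in H. have h := INR_pos #|` A| ltac:(lia). rewrite Rmult_0_r Rmult_0_l in H. exfalso. exact: (Rle_not_lt _ _ H h).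
  - split => //. by rewrite -cardfs_gt0.
Qed.

Lemma ln_mono_nat (m n : nat) : (1 <= m)%N -> (m <= n)%N -> ln (INR m) <= ln (INR n).
Proof. move=> H1 H2. apply: lnINR_le; lia. Qed.

Lemma S1_ge1 (B : {fset R}) : B != fset0 -> (1 <= S1 B)%N.
Proof.
  case/fset0Pn => x Hx. rewrite /S1.
  have : (0 < #|` sumset1 B|)%N. { rewrite cardfs_gt0. apply/fset0Pn. exists (x + x)%R. by apply: in_imfset2. }
  lia.
Qed.

Lemma INR_addn (m n : nat) : INR (m + n)%N = INR m + INR n.
Proof. exact: plus_INR. Qed.

Lemma Q1 delta : 0 < delta -> sp_admissible delta -> exists a E, 0 <= E /\ a <= 0 /\ Qk delta 1 a E.
Proof.
  move=> Hd Hadm. have [a0 [E0 [HE0 Hadm']]] := @adm_log delta Hadm.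
  exists (Rmin a0 0), (1 + delta + E0). split; first lra. split; first exact: Rmin_r.
  move=> d F A HA HF Hc Hn.
  case: (set_0Vmem F) => [EF|[i Hi]].
  - subst F. apply: empty_case => //. exact: Rmin_r.
  - have EF : F = [set i].
    { apply/eqP. rewrite eq_sym eqEcard sub1set Hi cards1 /=. exact: HF. }
    have [M [HM HK]] := pigeon i HA.
    have [HK1 HBne] := BM_facts HA HK.
    have [b0 Hb0] := fset0Pn _ HBne.
    have HM1 : M = 1%N.
    { rewrite in_BM in Hb0. case/andP: Hb0 => _ Hb0.
      have Hc0 : const_out set0 (fib i A b0). { have := @fib_const _ _ _ i b0 Hc. by rewrite EF setDv. }
      have := const_out_le1 Hc0. lia. }
    subst M.
    have H2 := @two_part _ F A i 1%N erefl Hc Hn. rewrite mul1n in H2.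
    have HA1 := Hadm' _ HBne.
    have HN : (1 <= #|` A|)%N by rewrite cardfs_gt0.
    have HS1 := S1_ge1 HBne.
    apply: (combine1 delta a0 E0 (ln (INR (SS A))) #|` A| #|` BM i A 1|); [exact: Hd | exact: HE0 | lia | lia | exact: HK | ].
    have := lg_le #|` BM i A 1| #|` A| ltac:(lia) ltac:(have := card_BM_le i A 1; lia).
    have := ln_mono_nat HS1 H2.
    move=> Hln Hlg. rewrite /S1 INR_addn in Hln. rewrite -?RplusE in HA1.
    have HE : E0 * lg #|` BM i A 1| <= E0 * lg #|` A| by apply: Rmult_le_compat_l.
    rewrite [INR 1]/= ln_1. lra.
Qed.


Lemma Qstep delta k a E : 0 < delta -> sp_admissible delta -> (1 <= k)%N -> 0 <= E -> a <= 0 ->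
  Qk delta k a E -> exists a' E', 0 <= E' /\ a' <= 0 /\ Qk delta k.+1 a' E'.
Proof.
  move=> Hd Hadm Hk HE Ha HQ. have [a0 [E0 [HE0 Hadm']]] := @adm_log delta Hadm.
  exists (Rmin (Rmin a0 (a - ln 2)) 0), (1 + delta + E0 + E).
  split; first lra. split; first exact: Rmin_r.
  move=> d F A HA HF Hc Hn.
  case: (set_0Vmem F) => [EF|[i Hi]].
  - subst F. apply: empty_case => //. exact: Rmin_r.
  - have [M [HM HK]] := pigeon i HA.
    have [HK1 HBne] := BM_facts HA HK.
    have HM1 : (1 <= M)%N by lia.
    have H2 := @two_part _ F A i M HM1 Hc Hn.
    have Hfib := fib_part i A (fset_uniq (BM i A M)).
    have HA1 := Hadm' _ HBne.
    have HN : (1 <= #|` A|)%N by rewrite cardfs_gt0.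
    have HS1 := S1_ge1 HBne.
    set N := #|` A| in HK HN HM *. set K := #|` BM i A M| in HK HK1 HA1 *.
    have HKN : (K <= N)%N by apply: card_BM_le.
    set T := a + (1 + delta / INR k) * ln (INR M) - E * lg N.
    have Hkpos : 0 < INR k by apply: INR_pos; lia.
    have Hdk : 0 <= delta / INR k by apply: Rlt_le; apply: Rdiv_lt_0_compat; lra.
    have Hfb : forall b, b \in BM i A M -> exp T <= INR (SS (fib i A b)).
    { move=> b Hb. have Hb' := Hb. rewrite in_BM in Hb'. case/andP: Hb' => _ HMb.
      have Hne : fib i A b != fset0 by rewrite -cardfs_gt0; lia.
      have HFi : (#|F :\ i| <= k)%N. { move: HF. rewrite (cardsD1 i F) Hi. lia. }
      have := HQ _ (F :\ i) (fib i A b) Hne HFi (@fib_const _ _ _ i b Hc) (@fib_nz _ _ _ i b Hn).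
      have Hfn : (#|` fib i A b| <= N)%N by apply: fsubset_leq_card; apply: fib_sub.
      have L1 : ln (INR M) <= ln (INR #|` fib i A b|) by apply: ln_mono_nat.
      have L2 : lg #|` fib i A b| <= lg N by apply: lg_le; lia.
      have L3 : (1 + delta / INR k) * ln (INR M) <= (1 + delta / INR k) * ln (INR #|` fib i A b|)
        by apply: Rmult_le_compat_l; lra.
      have L4 : E * lg #|` fib i A b| <= E * lg N by apply: Rmult_le_compat_l.
      move=> H. apply: exp_le_of_ln.
      + apply: INR_pos. have := SS_ge1 Hne. lia.
      + rewrite /T. lra. }
    have Hsum := real_sum_ge Hfb.
    have Hsum2 : INR K * exp T <= 2 * INR (SS A).
    { apply: Rle_trans Hsum _. have := le_INR _ _ (leP Hfib). rewrite mult_INR /=. lra. }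
    have HKp : 0 < INR K by apply: INR_pos; lia.
    have HSp : 0 < INR (SS A) by apply: INR_pos; have := SS_ge1 HA; lia.
    have Hl1 : ln (INR K) + T <= ln 2 + ln (INR (SS A)).
    { have := ln_le' _ _ (Rmult_lt_0_compat _ _ HKp (exp_pos T)) Hsum2.
      rewrite ln_mult ?ln_exp; try lra; last by apply: exp_pos. rewrite ln_mult; lra. }
    have Hl2 : ln (INR M) + ln (INR (S1 (BM i A M))) <= ln (INR (SS A)).
    { have HMp : 0 < INR M by apply: INR_pos; lia.
      have HS1p : 0 < INR (S1 (BM i A M)) by apply: INR_pos; lia.
      rewrite -ln_mult //. apply: ln_le'. exact: Rmult_lt_0_compat.
      rewrite -mult_INR. apply: le_INR. exact/leP. }
    have Hlg : lg K <= lg N by apply: lg_le; lia.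
    have HE0L : E0 * lg K <= E0 * lg N by apply: Rmult_le_compat_l.
    rewrite /S1 INR_addn in Hl2. rewrite -?RplusE in HA1.
    apply: (combine delta a a0 E E0 (ln (INR (SS A))) k N M K) => //; try lia.
    all: unfold T in Hl1; lra.
Qed.


Lemma Qall delta : 0 < delta -> sp_admissible delta ->
  forall k, (1 <= k)%N -> exists a E, 0 <= E /\ a <= 0 /\ Qk delta k a E.
Proof.
  move=> Hd Hadm. elim => [|k IH] Hk; first by [].
  case: (posnP k) => [->|Hk0]; first exact: Q1.
  have [a [E [HE [Ha HQ]]]] := IH Hk0.
  exact: Qstep Hd Hadm Hk0 HE Ha HQ.
Qed.

Lemma const_out_sub d (F : {set 'I_d}) (A A' : {fset 'rV[R]_d}) : A' `<=` A -> const_out F A -> const_out F A'.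
Proof. move=> H Hc x y Hx Hy. apply: Hc; by apply: (fsubsetP H). Qed.

Lemma nz_on_sub d (F : {set 'I_d}) (A A' : {fset 'rV[R]_d}) : A' `<=` A -> nz_on F A -> nz_on F A'.
Proof. move=> H Hn x Hx. apply: Hn; by apply: (fsubsetP H). Qed.

Definition zpart d (i : 'I_d) (A : {fset 'rV[R]_d}) (bb : bool) : {fset 'rV[R]_d} :=
  [fset a in A | (a ord0 i == 0%R) == bb].

Lemma zpart_sub d (i : 'I_d) A bb : zpart i A bb `<=` A.
Proof. apply/fsubsetP => a. rewrite !inE. by case/andP. Qed.

Lemma zpart_cover d (i : 'I_d) (A : {fset 'rV[R]_d}) : (#|` A| <= #|` zpart i A true| + #|` zpart i A false|)%N.
Proof.
  have := @cover_sum_ge _ _ [:: true; false] (zpart i A) A.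
  rewrite big_cons big_seq1. apply => w Hw. exists (w ord0 i == 0%R).
  - by case: (w ord0 i == 0%R).
  - by rewrite !inE Hw eqxx.
Qed.

Lemma reduce n : forall d (F G : {set 'I_d}) (A : {fset 'rV[R]_d}),
  (#|F :\: G| <= n)%N -> G \subset F -> A != fset0 -> const_out F A -> nz_on G A ->
  exists (A' : {fset 'rV[R]_d}) (F' : {set 'I_d}), A' `<=` A /\ A' != fset0 /\ F' \subset F /\ const_out F' A' /\ nz_on F' A'
                   /\ (#|` A| <= 2 ^ n * #|` A'|)%N.
Proof.
  elim: n => [|n IH] d F G A Hcard HGF HA Hc Hn.
  - exists A, F. split; [exact: fsubset_refl|split; [done|split; [exact: subxx|split; [done|split]]]].
    + move=> a Ha j Hj. apply: Hn => //. apply/negPn/negP => HjG.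
      have Hj' : j \in F :\: G by rewrite inE HjG Hj.
      have : (0 < #|F :\: G|)%N by apply/card_gt0P; exists j.
      lia.
    + rewrite expn0 mul1n. exact: leqnn.
  - case: (set_0Vmem (F :\: G)) => [E|[i Hi]].
    + exists A, F. split; [exact: fsubset_refl|split; [done|split; [exact: subxx|split; [done|split]]]].
      * move=> a Ha j Hj. apply: Hn => //. apply/negPn/negP => HjG.
        have : j \in F :\: G by rewrite inE HjG Hj.
        by rewrite E inE.
      * have : (0 < 2 ^ n.+1)%N by rewrite expn_gt0. move=> H. rewrite -[X in (X <= _)%N]mul1n.
        apply: leq_mul => //.
    + have HiF : i \in F by move: Hi; rewrite inE => /andP [].
      have HiG : i \notin G by move: Hi; rewrite inE => /andP [].
      have Hsub : forall H : {set 'I_d}, H \subset (F :\: G) :\ i -> (#|H| <= n)%N.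
      { move=> H /subset_leq_card. move: Hcard. rewrite (cardsD1 i (F :\: G)) Hi. lia. }
      have Hcov := zpart_cover i A.
      have HN : (0 < #|` A|)%N by rewrite cardfs_gt0.
      case: (leqP #|` A| (2 * #|` zpart i A true|)) => Hbig.
      * have Hne : zpart i A true != fset0 by rewrite -cardfs_gt0; lia.
        have P1 : (#|(F :\ i) :\: G| <= n)%N.
        { apply: Hsub. apply/subsetP => j. rewrite !inE. by case: (j == i); case: (j \in G); case: (j \in F). }
        have P2 : G \subset F :\ i.
        { apply/subsetP => j Hj. rewrite !inE (subsetP HGF j Hj) andbT. apply/eqP => E. by rewrite -E Hj in HiG. }
        have P3 : const_out (F :\ i) (zpart i A true).
        { move=> x y Hx Hy j Hj. case: (eqVneq j i) => [->|Hji].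
          - move: Hx Hy. rewrite !inE ?eqb_id => /andP [_ /eqP ->] /andP [_ /eqP ->] //.
          - apply: Hc; [exact: (fsubsetP (zpart_sub i A true)) | exact: (fsubsetP (zpart_sub i A true)) |].
            move: Hj. by rewrite !inE Hji. }
        have [A' [F' [H1 [H2 [H3 [H4 [H5 H6]]]]]]] := IH d (F :\ i) G (zpart i A true) P1 P2 Hne P3
          (nz_on_sub (zpart_sub i A true) Hn).
        exists A', F'. split; [|split; [done|split; [|split; [done|split; [done|]]]]].
        -- exact: fsubset_trans H1 (zpart_sub i A true).
        -- apply: subset_trans H3 _. apply/subsetP => j. rewrite !inE. by case/andP.
        -- rewrite expnS -mulnA. lia.
      * have Hne : zpart i A false != fset0 by rewrite -cardfs_gt0; lia.
        have P1 : (#|F :\: (i |: G)| <= n)%N.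
        { apply: Hsub. apply/subsetP => j. rewrite !inE. by case: (j == i); case: (j \in G); case: (j \in F). }
        have P2 : i |: G \subset F.
        { apply/subsetP => j. rewrite !inE => /orP [/eqP ->|Hj] //. exact: (subsetP HGF). }
        have P4 : nz_on (i |: G) (zpart i A false).
        { move=> x Hx j. rewrite !inE => /orP [/eqP ->|Hj].
          - move: Hx. rewrite !inE ?eqbF_neg => /andP [_ H]. by apply/eqP.
          - apply: Hn => //. exact: (fsubsetP (zpart_sub i A false)). }
        have [A' [F' [H1 [H2 [H3 [H4 [H5 H6]]]]]]] := IH d F (i |: G) (zpart i A false) P1 P2 Hne
          (const_out_sub (zpart_sub i A false) Hc) P4.
        exists A', F'. split; [|split; [done|split; [done|split; [done|split; [done|]]]]].
        -- exact: fsubset_trans H1 (zpart_sub i A false).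
        -- rewrite expnS -mulnA. lia.
Qed.


Lemma INR_expn2 r : INR (2 ^ r)%N = 2 ^ r.
Proof. elim: r => [|r IH] //. rewrite expnS mult_INR IH /=. lra. Qed.

Lemma lemma3p1_aux (delta1 : R) (Hpos : (0 < delta1)%R)
  (Hadm : sp_admissible delta1) (r : nat) (Hr : (1 <= r)%N) :
  exists C D : R, (0 < C)%R /\
    forall (d : nat) (f : 'I_d -> option R) (A : {fset 'rV[R]_d}),
      (2 <= d)%N -> (r <= d - 1)%N -> axis_dim f = r ->
      A != fset0 ->
      (forall a, a \in A -> in_axis_aligned f a) ->
      gtrsim_with C D
        (INR #|` sumset A| + INR #|` prodset A|)%R
        (Rpower (INR #|` A|) (1 + delta1 / INR r))
        #|` A|.
Proof.
  move/RltP: Hpos => Hd.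
  have [a [E [HE [Ha HQ]]]] := Qall Hd Hadm Hr.
  set al := 1 + delta1 / INR r.
  have Hrpos : 0 < INR r by apply: INR_pos; lia.
  have Hal : 0 < al by rewrite /al; have := Rdiv_lt_0_compat _ _ Hd Hrpos; lra.
  exists (exp (a - al * (INR r * ln 2) - E * ln 3)), (- E).
  split; first by apply/RltP; exact: exp_pos.
  move=> d f A _ _ Hdim HA Hin.
  set F0 := [set j | f j == None].
  have Hc : const_out F0 A.
  { move=> x y Hx Hy j Hj. have Hx' := Hin x Hx j. have Hy' := Hin y Hy j.
    move: Hj. rewrite inE. case: (f j) Hx' Hy' => [c|] //= -> -> //. }
  have Hn0 : nz_on set0 A by move=> x Hx j; rewrite inE.
  have [A' [F' [H1 [H2 [H3 [H4 [H5 H6]]]]]]] :=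
    @reduce r d F0 set0 A ltac:(by rewrite setD0 -Hdim) (sub0set F0) HA Hc Hn0.
  have HF' : (#|F'| <= r)%N by rewrite -Hdim; exact: subset_leq_card.
  have HQ' := HQ d F' A' H2 HF' H4 H5.
  have HSS := SS_mono H1.
  have HN : (1 <= #|` A|)%N by rewrite cardfs_gt0.
  have HN' : (1 <= #|` A'|)%N by rewrite cardfs_gt0.
  have HNN : (#|` A'| <= #|` A|)%N by apply: fsubset_leq_card.
  have HS1 : (1 <= SS A)%N by apply: SS_ge1.
  have HSp : 0 < INR (SS A) by apply: INR_pos; lia.
  have Hln1 : ln (INR (SS A')) <= ln (INR (SS A)).
  { apply: ln_mono_nat => //. exact: SS_ge1. }
  have Hln2 : ln (INR #|` A|) <= INR r * ln 2 + ln (INR #|` A'|).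
  { have h : INR #|` A| <= 2 ^ r * INR #|` A'|.
    { rewrite -INR_expn2 -mult_INR. apply: le_INR. exact/leP. }
    have h2 := ln_le' _ _ (INR_pos #|` A| ltac:(lia)) h.
    have h3 : ln (2 ^ r * INR #|` A'|) = ln (2 ^ r) + ln (INR #|` A'|).
    { apply: ln_mult; [apply: pow_lt; lra | apply: INR_pos; lia]. }
    rewrite h3 ln_pow in h2; lra. }
  have Hlg : lg #|` A'| <= lg #|` A| by apply: lg_le; lia.
  have HElg : E * lg #|` A'| <= E * lg #|` A| by apply: Rmult_le_compat_l.
  have Hmul : al * (ln (INR #|` A|) - INR r * ln 2) <= al * ln (INR #|` A'|)
    by apply: Rmult_le_compat_l; lra.
  have Hlnln : - E * ln (ln (INR #|` A|)) <= - E * lg #|` A| + E * ln 3.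
  { case: (eqVneq #|` A| 1%N) => [E1|E1].
    - rewrite E1 lnln1 lg1. have := ln_INR_ge0 3 ltac:(lia). rewrite /= => h.
      have : 0 <= E * ln 3. { apply: Rmult_le_pos => //. move: h. by rewrite (_ : 1 + 1 + 1 = 3); lra. }
      lra.
    - have [_ h] := lnln_bounds #|` A| ltac:(lia).
      have : E * (lg #|` A| - ln 3) <= E * ln (ln (INR #|` A|)) by apply: Rmult_le_compat_l.
      lra. }
  apply/gtrsimE. apply: final_conv => //; first exact: exp_pos.
  - rewrite -RplusE -!INR_addn. exact: HSp.
  - rewrite -RplusE -!INR_addn ln_exp. rewrite /al in Hmul HQ' *.
    rewrite /SS in Hln1 HQ'. lra.
Qed.


Local Close Scope R_scope.
Local Close Scope fset_scope.

Theorem lemma3p1 (delta1 : R) (Hpos : (0 < delta1)%R)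
  (Hadm : sp_admissible delta1) (r : nat) (Hr : (1 <= r)%N) :
  exists C D : R, (0 < C)%R /\
    forall (d : nat) (f : 'I_d -> option R) (A : {fset 'rV[R]_d}),
      (2 <= d)%N -> (r <= d - 1)%N -> axis_dim f = r ->
      A != fset0 ->
      (forall a, a \in A -> in_axis_aligned f a) ->
      gtrsim_with C D
        (INR #|` sumset A| + INR #|` prodset A|)%R
        (Rpower (INR #|` A|) (1 + delta1 / INR r))
        #|` A|.
Proof. exact: (lemma3p1_aux Hpos Hadm Hr). Qed.
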